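(* Let $(\Sigma,\mathscr{P})$ be a Kelvin-Planck theory with set $\mathscr{T}_{CD}$ of Clausius-Duhem temperature scales, let $\Sigma^0\subset\Sigma$, and let $\mathscr{T}^0_{CD}$ be the set of restrictions of members of $\mathscr{T}_{CD}$ to $\Sigma^0$. The following are equivalent: (i) all members of $\mathscr{T}^0_{CD}$ are positive multiples of some fixed one; (ii) for each pair of distinct states in $\Sigma^0$ there is a Carnot element operating between them.
   Context: $\Sigma$ is a compact Hausdorff space. $\mathscr{M}(\Sigma)$ is the vector space of regular signed Borel measures on $\Sigma$ with its weak-star topology; $\mathscr{M}_+(\Sigma)$ the nonnegative members; $\mathscr{M}^\circ(\Sigma)=\{\mu:\mu(\Sigma)=0\}$; $\mathscr{V}(\Sigma)=\mathscr{M}^\circ(\Sigma)\oplus\mathscr{M}(\Sigma)$ with the product topology. For $\mathscr{P}\subset\mathscr{V}(\Sigma)$, $\hat{\mathscr{P}}$ is the closure of the set of nonnegative multiples of members of $\mathscr{P}$. A thermodynamical theory is $(\Sigma,\mathscr{P})$ with $\hat{\mathscr{P}}$ convex; it is Kelvin-Planck if $\hat{\mathscr{P}}\cap\{(0,\nu):\nu\in\mathscr{M}_+(\Sigma)\}=\{(0,0)\}$. A Clausius-Duhem pair is $(\eta,T)$, $\eta\in C(\Sigma,\mathbb{R})$, $T\in C(\Sigma,(0,\infty))$, with $\int_\Sigma\eta\,d(\Delta\mathscr{m})\ge\int_\Sigma\frac{d\mathscr{q}}{T}$ for all $(\Delta\mathscr{m},\mathscr{q})\in\mathscr{P}$; $T$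 is then a Clausius-Duhem temperature scale. A reversible element is a member of $\hat{\mathscr{P}}$ whose negative also lies in $\hat{\mathscr{P}}$. A Carnot element operating between states $\sigma'$ and $\sigma$ is a reversible element of the form $(0,c'\delta_{\sigma'}-c\,\delta_\sigma)$ with $c',c>0$ constants. *)

(* Defs.v *)
From mathcomp Require Import all_boot all_order all_algebra.
From mathcomp Require Import all_classical all_reals all_analysis.
Import numFieldNormedType.Exports.
Import Order.TTheory GRing.Theory Num.Theory.
Local Open Scope ring_scope.
Local Open Scope classical_set_scope.

(* Regular signed Borel measures on a compact Hausdorff space Sigma are
   represented, via the Riesz-Markov theorem, as bounded linear functionals
   on C(Sigma,R).  A "functional" is only meaningful through its values on
   continuous functions; every notion below depends only on those values. *)

Section Thermo.
Context {R : realType} {T : topologicalType}.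

Definition functional := (T -> R) -> R.

Definition one : T -> R := fun _ => 1.
Definition zerof : functional := fun _ => 0.

Definition is_measure (mu : functional) : Prop :=
  [/\ (forall f g : T -> R, continuous f -> continuous g ->
         mu (fun x => f x + g x) = mu f + mu g),
      (forall (a : R) (f : T -> R), continuous f -> mu (fun x => a * f x) = a * mu f) &
      (exists M : R, forall (f : T -> R) (c : R), continuous f ->
         (forall x, `|f x| <= c) -> `|mu f| <= M * c)].

Definition meq (mu nu : functional) : Prop :=
  forall f : T -> R, continuous f -> mu f = nu f.

Definition is_pos_measure (mu : functional) : Prop :=
  is_measure mu /\
  forall f : T -> R, continuous f -> (forall x, 0 <= f x) -> 0 <= mu f.

Definition dirac (s : T) : functional := fun f => f s.

(* members of V(Sigma) = M^o(Sigma) (+) M(Sigma) *)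
Definition in_V (p : functional * functional) : Prop :=
  [/\ is_measure p.1, is_measure p.2 & p.1 one = 0].

(* \hat P : closure in V(Sigma) (weak-star product topology) of the set of
   nonnegative multiples of members of P.  The basic weak-star neighbourhoods
   of p are given by finitely many continuous test functions and an eps > 0. *)
Definition hat (P : set (functional * functional)) : set (functional * functional) :=
  [set p | in_V p /\
    forall (n : nat) (fs : 'I_n -> T -> R) (eps : R),
      (forall i, continuous (fs i)) -> 0 < eps ->
      exists (lam : R) (q : functional * functional),
        [/\ P q, 0 <= lam &
          forall i, `|p.1 (fs i) - lam * q.1 (fs i)| < eps /\
                    `|p.2 (fs i) - lam * q.2 (fs i)| < eps]].

Definition convex_set (S : set (functional * functional)) : Prop :=
  forall p q (t : R), S p -> S q -> 0 <= t -> t <= 1 ->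
    S (fun f => t * p.1 f + (1 - t) * q.1 f,
       fun f => t * p.2 f + (1 - t) * q.2 f).

Definition thermo_theory (P : set (functional * functional)) : Prop :=
  (forall p, P p -> in_V p) /\ convex_set (hat P).

Definition Kelvin_Planck (P : set (functional * functional)) : Prop :=
  [/\ thermo_theory P,
      hat P (zerof, zerof) &
      forall p, hat P p -> meq p.1 zerof -> is_pos_measure p.2 ->
        meq p.2 zerof].

Definition CD_pair (P : set (functional * functional)) (eta Temp : T -> R) : Prop :=
  [/\ continuous eta, continuous Temp, (forall x, 0 < Temp x) &
      forall p, P p -> p.2 (fun x => (Temp x)^-1) <= p.1 eta].

Definition CD_scale (P : set (functional * functional)) (Temp : T -> R) : Prop :=
  exists eta, CD_pair P eta Temp.

Definition reversible (P : set (functional * functional))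
  (p : functional * functional) : Prop :=
  hat P p /\ hat P (fun f => - p.1 f, fun f => - p.2 f).

Definition has_Carnot (P : set (functional * functional)) (s' s : T) : Prop :=
  exists c' c : R, [/\ 0 < c', 0 < c &
    reversible P (zerof, fun f => c' * dirac s' f - c * dirac s f)].

End Thermo.

(* Main.v *)
Require Import Defs.
From mathcomp Require Import all_boot all_order all_algebra.
From mathcomp Require Import all_classical all_reals all_analysis.
From mathcomp Require Import ring lra.
Import numFieldNormedType.Exports.
Import Order.TTheory GRing.Theory Num.Theory.
Local Open Scope ring_scope.
Local Open Scope classical_set_scope.
Section HB.
Variables (R : realType) (X : Type).
Local Notation E := (X -> R).
Variable V : set E.
Hypothesis VD : forall {f g}, V f -> V g -> V (fun x => f x + g x).
Hypothesis VZ : forall {a f}, V f -> V (fun x => a * f x).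
Variable phi : E -> R.
Hypothesis phiD : forall {f g}, V f -> V g -> phi (fun x => f x + g x) <= phi f + phi g.
Hypothesis phiZ : forall {t f}, V f -> 0 < t -> t * phi f <= phi (fun x => t * f x).
Variable x0 : E.
Hypothesis Vx0 : V x0.

Lemma phiZE {t f} : V f -> 0 < t -> phi (fun x => t * f x) = t * phi f.
Proof.
move=> Vf t0; apply/eqP; rewrite eq_le phiZ // andbT.
have ti : 0 < t^-1 by rewrite invr_gt0.
have := phiZ (@VZ t _ Vf) ti.
have -> : (fun x => t^-1 * (t * f x)) = f.
  by apply: funext => x; rewrite mulrA mulVf ?gt_eqF // mul1r.
by rewrite ler_pdivrMl.
Qed.

Let z0 : E := fun _ => 0.
Lemma Vz0 : V z0.
Proof.
have -> : z0 = (fun x => 0 * x0 x) by apply: funext => x; rewrite mul0r.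
exact: VZ.
Qed.

Lemma phiz0 : 0 <= phi z0.
Proof.
have := phiD Vz0 Vz0.
have -> : (fun x => z0 x + z0 x) = z0 by apply: funext => x; rewrite /z0 addr0.
lra.
Qed.

Lemma phi_base t : t * phi x0 <= phi (fun x => t * x0 x).
Proof.
have [t0|t0|->] := ltgtP t 0; last first.
- rewrite mul0r; have -> : (fun x => 0 * x0 x) = z0 by apply: funext => x; rewrite mul0r.
  exact: phiz0.
- exact: phiZ.
have h1 := phiD (@VZ t _ Vx0) (@VZ (- t) _ Vx0).
rewrite (_ : (fun x => t * x0 x + - t * x0 x) = z0) in h1; last first.
  by apply: funext => x; rewrite /z0; ring.
have mt : 0 < - t by rewrite oppr_gt0.
have h2 := phiZE Vx0 mt.
have := phiz0. rewrite h2 in h1. lra.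
Qed.

Definition good (G : set (E * R)) :=
  [/\ (forall f r, G (f, r) -> V f /\ r <= phi f),
      (forall f r s, G (f, r) -> G (f, s) -> r = s),
      (forall f r g s a b, G (f, r) -> G (g, s) ->
          G (fun x => a * f x + b * g x, a * r + b * s)) &
      (forall t, G (fun x => t * x0 x, t * phi x0))].

Lemma good_scale {G f r} a : good G -> G (f, r) -> G (fun x => a * f x, a * r).
Proof.
case=> _ _ Gl _ Gfr; have := Gl _ _ _ _ a 0 Gfr Gfr.
have -> : (fun x => a * f x + 0 * f x) = (fun x => a * f x).
  by apply: funext => x; ring.
by rewrite mul0r addr0.
Qed.

Lemma good_add {G f r g s} : good G -> G (f, r) -> G (g, s) ->
  G (fun x => f x + g x, r + s).
Proof.
case=> _ _ Gl _ Gfr Ggs; have := Gl _ _ _ _ 1 1 Gfr Ggs.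
have -> : (fun x => 1 * f x + 1 * g x) = (fun x => f x + g x).
  by apply: funext => x; ring.
by rewrite !mul1r.
Qed.

Lemma good_ext {G h} : good G -> V h -> ~ (exists r, G (h, r)) ->
  exists B, good B /\ G `<` B.
Proof.
move=> gG Vh nh; have [Gdom Gfun Glin Gbase] := gG.
set L := [set y | exists f r, G (f, r) /\ y = r - phi (fun x => f x - h x)].
have G0 : G (z0, 0).
  have := Gbase 0; rewrite mul0r.
  by have -> : (fun x => 0 * x0 x) = z0 by apply: funext => x; rewrite mul0r.
have Lne : L !=set0.
  by exists (0 - phi (fun x => z0 x - h x)); exists z0, 0.
have Lub g s : G (g, s) -> ubound L (phi (fun x => g x + h x) - s).
  move=> Ggs _ [f [r [Gfr ->]]].
  have Gs := good_add gG Gfr Ggs.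
  have [Vfg le1] := Gdom _ _ Gs.
  have [Vf _] := Gdom _ _ Gfr. have [Vg _] := Gdom _ _ Ggs.
  have Vmh : V (fun x => -1 * h x) by exact: VZ.
  have h2 := phiD (VD Vf Vmh) (VD Vg Vh).
  rewrite (_ : (fun x => (f x + -1 * h x) + (g x + h x)) = (fun x => f x + g x)) in h2; last first.
    by apply: funext => x; ring.
  rewrite (_ : (fun x => f x + -1 * h x) = (fun x => f x - h x)) in h2; last first.
    by apply: funext => x; ring.
  lra.
have Lhas : has_ubound L.
  by exists (phi (fun x => z0 x + h x) - 0); exact: Lub.
set c := sup L.
have cub f r : G (f, r) -> r - phi (fun x => f x - h x) <= c.
  by move=> Gfr; apply: sup_upper_bound; [split|exists f, r].
have clb g s : G (g, s) -> c <= phi (fun x => g x + h x) - s.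
  by move=> Ggs; apply: ge_sup => //; exact: Lub.
pose B : set (E * R) := fun z => exists f r t, G (f, r) /\
   z = ((fun x => f x + t * h x), r + t * c).
have GB : G `<=` B.
  case=> f r Gfr; exists f, r, 0; split => //.
  congr pair; last by rewrite mul0r addr0.
  by apply: funext => x; rewrite mul0r addr0.
exists B; split; last first.
  split => //; move=> /(_ (h, c)) HB; apply: nh; exists c; apply: HB.
  exists z0, 0, 1; split => //; congr pair; last by rewrite mul1r add0r.
  by apply: funext => x; rewrite /z0 mul1r add0r.
split.
- move=> _ _ [f [r [t [Gfr [-> ->]]]]].
  have [Vf rle] := Gdom _ _ Gfr.
  split; first exact: VD Vf (@VZ t _ Vh).
  have [t0|t0|->] := ltgtP t 0; last first.
  + have -> : (fun x => f x + 0 * h x) = f by apply: funext => x; ring.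
    by rewrite mul0r addr0.
  + have Gs := good_scale t^-1 gG Gfr.
    have h1 := clb _ _ Gs.
    have Vs : V (fun x => t^-1 * f x + h x) by apply: VD => //; exact: VZ.
    have h2 := phiZE Vs t0.
    rewrite (_ : (fun x => t * (t^-1 * f x + h x)) = (fun x => f x + t * h x)) in h2; last first.
      apply: funext => x; rewrite mulrDr mulrA mulfV ?gt_eqF // mul1r //.
    rewrite h2.
    have : t * c <= t * (phi (fun x => t^-1 * f x + h x) - t^-1 * r).
      by rewrite ler_pM2l.
    rewrite mulrBr mulrA mulfV ?gt_eqF // mul1r. lra.
  + have u0 : 0 < - t by rewrite oppr_gt0.
    have Gs := good_scale (- t)^-1 gG Gfr.
    have h1 := cub _ _ Gs.
    have Vs : V (fun x => (- t)^-1 * f x - h x).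
      apply: VD; first exact: VZ.
      have -> : (fun x => - h x) = (fun x => -1 * h x) by apply: funext => x; ring.
      exact: VZ.
    have h2 := phiZE Vs u0.
    rewrite (_ : (fun x => - t * ((- t)^-1 * f x - h x)) = (fun x => f x + t * h x)) in h2; last first.
      apply: funext => x; rewrite mulrBr mulrA mulfV ?gt_eqF // mul1r; ring.
    rewrite h2.
    have : - t * ((- t)^-1 * r - phi (fun x => (- t)^-1 * f x - h x)) <= - t * c.
      by rewrite ler_pM2l.
    rewrite mulrBr mulrA mulfV ?gt_eqF // mul1r. lra.
- move=> _ r1 r2 [f [r [t [Gfr [-> ->]]]]] [f' [r' [t' [Gfr' [E1 ->]]]]].
  have [tt|ntt] := eqVneq t t'.
  + subst t'.
    have ff : f = f'.
      apply: funext => x; have := congr1 (fun F => F x) E1 => /= ?; lra.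
    subst f'; by rewrite (Gfun _ _ _ Gfr Gfr').
  + exfalso; apply: nh.
    have Gc := Glin _ _ _ _ ((t' - t)^-1) (- (t' - t)^-1) Gfr Gfr'.
    eexists; move: Gc; congr G; congr pair; apply: funext => x.
    have := congr1 (fun F => F x) E1 => /= Ex.
    have ne : t' - t != 0 by rewrite subr_eq0 eq_sym.
    have -> : f x = f' x + t' * h x - t * h x by lra.
    rewrite mulNr -mulrBr.
    have -> : f' x + t' * h x - t * h x - f' x = (t' - t) * h x by ring.
    by rewrite mulrA mulVf // mul1r.
- move=> _ _ _ _ a b [f [r [t [Gfr [-> ->]]]]] [g [s [t' [Ggs [-> ->]]]]].
  exists (fun x => a * f x + b * g x), (a * r + b * s), (a * t + b * t').
  split; first exact: Glin.
  congr pair; last by ring.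
  by apply: funext => x; ring.
- move=> t; exact: GB.
Qed.

Lemma HahnBanach : exists nu : E -> R,
  [/\ (forall f g, V f -> V g -> nu (fun x => f x + g x) = nu f + nu g),
      (forall a f, V f -> nu (fun x => a * f x) = a * nu f),
      (forall f, V f -> nu f <= phi f) & nu x0 = phi x0].
Proof.
pose PP (G : set (E * R)) := G = set0 \/ good G.
have [A [PA Amax]] : exists A, PP A /\ forall B, A `<` B -> ~ PP B.
  apply: Zorn_bigcup => F FP Ftot.
  have [allz|] := pselect (forall G, F G -> G = set0).
    left; apply/seteqP; split => // z [G FG]; by rewrite (allz _ FG).
  move=> /existsNP [G0 /not_implyP [FG0 G0n]].
  have gF G z : F G -> G z -> good G.
    move=> FG Gz; case: (FP _ FG) => // G0e; by rewrite G0e in Gz.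
  have gG0 : good G0 by case: (FP _ FG0).
  right; split.
  - move=> f r [G FG Gz]; have [d _ _ _] := gF _ _ FG Gz; exact: d.
  - move=> f r s [G1 F1 G1z] [G2 F2 G2z].
    have [S12|S21] := Ftot _ _ F1 F2.
    + have [_ fn _ _] := gF _ _ F2 G2z; exact: fn _ _ _ (S12 _ G1z) G2z.
    + have [_ fn _ _] := gF _ _ F1 G1z; exact: fn _ _ _ G1z (S21 _ G2z).
  - move=> f r g s a b [G1 F1 G1z] [G2 F2 G2z].
    have [S12|S21] := Ftot _ _ F1 F2.
    + have [_ _ ln _] := gF _ _ F2 G2z; exists G2 => //; exact: ln _ _ _ _ _ _ (S12 _ G1z) G2z.
    + have [_ _ ln _] := gF _ _ F1 G1z; exists G1 => //; exact: ln _ _ _ _ _ _ G1z (S21 _ G2z).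
  - move=> t; exists G0 => //; by case: gG0.
pose Gb : set (E * R) := fun z => exists t, z = ((fun x => t * x0 x), t * phi x0).
have gGb : good Gb.
  split.
  - move=> f r [t [-> ->]]; split; [exact: VZ | exact: phi_base].
  - move=> f r s [t [E1 ->]] [t' [E2 ->]].
    have [nz|z] := pselect (exists x, x0 x != 0).
      case: nz => x nz; rewrite E1 in E2.
      have := congr1 (fun F => F x) E2 => /= /(mulIf nz) ->; done.
    have x0z : x0 = z0.
      apply: funext => x; apply: contrapT => nz; apply: z; exists x; apply/eqP => e; exact: nz.
    have : phi x0 = 0.
      have := phiZE Vx0 (ltr0Sn R 1).
      have -> : (fun x => 2%:R * x0 x) = x0 by rewrite x0z; apply: funext => x; rewrite /z0 mulr0.
      lra.
    by move=> ->; rewrite !mulr0.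
  - move=> f r g s a b [t [-> ->]] [t' [-> ->]].
    exists (a * t + b * t'); congr pair; last by ring.
    by apply: funext => x; ring.
  - by move=> t; exists t.
have gA : good A.
  case: PA => // A0; exfalso; apply: (Amax Gb); last by right.
  rewrite A0; split => //; move=> /(_ ((fun x => 1 * x0 x), 1 * phi x0)).
  by apply => //; exists 1.
have [Adom Afun Alin Abase] := gA.
have tot h : V h -> exists r, A (h, r).
  move=> Vh; apply: contrapT => nh.
  have [B [gB AB]] := good_ext gA Vh nh.
  by apply: (Amax B AB); right.
pose nu (h : E) := xget 0 (fun r => A (h, r)).
have nuP h : V h -> A (h, nu h) by move=> Vh; exact: (xgetPex 0 (tot h Vh)).
exists nu; split.
- move=> f g Vf Vg; apply: (Afun _ _ _ (nuP _ (VD Vf Vg))).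
  exact: good_add gA (nuP _ Vf) (nuP _ Vg).
- move=> a f Vf; apply: (Afun _ _ _ (nuP _ (@VZ a _ Vf))).
  exact: good_scale gA (nuP _ Vf).
- by move=> f Vf; have [] := Adom _ _ (nuP _ Vf).
- apply: (Afun _ _ _ (nuP _ Vx0)).
  have := Abase 1; rewrite mul1r.
  by have -> : (fun x => 1 * x0 x) = x0 by apply: funext => x; rewrite mul1r.
Qed.

End HB.
Section Basics.
Context {R : realType} {T : topologicalType}.
Implicit Types (mu nu : @functional R T) (f g : T -> R).

Lemma cD {f g} : continuous f -> continuous g -> continuous (fun x => f x + g x).
Proof. move=> cf cg x. exact: (continuousD (cf x) (cg x)). Qed.
Lemma cM {f g} : continuous f -> continuous g -> continuous (fun x => f x * g x).
Proof. move=> cf cg x. exact: (continuousM (cf x) (cg x)). Qed.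
Lemma cC (c : R) : continuous (fun _ : T => c).
Proof. exact: cst_continuous. Qed.
Lemma cZ (a : R) {f} : continuous f -> continuous (fun x => a * f x).
Proof. move=> cf; apply: cM => //; exact: cC. Qed.
Lemma cV {f} : continuous f -> (forall x, f x != 0) -> continuous (fun x => (f x)^-1).
Proof. move=> cf h x. exact: (continuousV (h x) (cf x)). Qed.

Lemma cbounded f : compact [set: T] -> continuous f -> exists M : R, forall x, `|f x| <= M.
Proof.
move=> cT cf.
have : compact (f @` setT).
  apply: continuous_compact => //. exact: continuous_subspaceT.
move=> /compact_bounded [M [Mreal HM]].
exists (M + 1) => x. apply: (HM (M+1)); first by rewrite ltrDl.
by exists x.
Qed.

Lemma csum (I : Type) (s : seq I) (F : I -> T -> R) :
  (forall i, continuous (F i)) -> continuous (fun x => \sum_(i <- s) F i x).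
Proof.
move=> cF; elim: s => [|i s IH].
  have -> : (fun x : T => \sum_(i <- [::]) F i x) = (fun _ => 0).
    by apply: funext => x; rewrite big_nil.
  exact: cC.
have -> : (fun x : T => \sum_(j <- i :: s) F j x) = (fun x => F i x + \sum_(j <- s) F j x).
  by apply: funext => x; rewrite big_cons.
exact: cD.
Qed.

Lemma meas0 {mu} : is_measure mu -> mu (fun _ => 0) = 0.
Proof.
case=> _ hZ _; have h := hZ 0 (fun _ => 0) (cC 0).
rewrite !mul0r in h; exact: h.
Qed.

Lemma measD {mu f g} : is_measure mu -> continuous f -> continuous g ->
  mu (fun x => f x + g x) = mu f + mu g.
Proof. by case=> hD _ _; exact: hD. Qed.

Lemma measZ {mu} a {f} : is_measure mu -> continuous f ->
  mu (fun x => a * f x) = a * mu f.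
Proof. by case=> _ hZ _; exact: hZ. Qed.

Lemma measN {mu f} : is_measure mu -> continuous f -> mu (fun x => - f x) = - mu f.
Proof.
move=> m cf; rewrite -mulN1r -(measZ (-1) m cf); apply: (f_equal mu); apply: funext => x; ring.
Qed.

Lemma meas_sum mu (I : Type) (s : seq I) (F : I -> T -> R) :
  is_measure mu -> (forall i, continuous (F i)) ->
  mu (fun x => \sum_(i <- s) F i x) = \sum_(i <- s) mu (F i).
Proof.
move=> m cF; elim: s => [|i s IH].
  rewrite big_nil -[RHS](meas0 m); apply: (f_equal mu); apply: funext => x; by rewrite big_nil.
rewrite big_cons -IH -measD //; last exact: csum.
by apply: (f_equal mu); apply: funext => x; rewrite big_cons.
Qed.

Lemma is_measure_comb {mu nu} (a b : R) : is_measure mu -> is_measure nu ->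
  is_measure (fun f => a * mu f + b * nu f).
Proof.
move=> m1 m2; have [D1 Z1 [M1 B1]] := m1; have [D2 Z2 [M2 B2]] := m2.
split.
- by move=> f g cf cg; rewrite D1 // D2 //; ring.
- by move=> c f cf; rewrite Z1 // Z2 //; ring.
- exists (`|a| * M1 + `|b| * M2) => f c cf hb.
  apply: (le_trans (ler_normD _ _)); rewrite !normrM mulrDl -!mulrA.
  by apply: lerD; apply: ler_wpM2l => //; [exact: B1 | exact: B2].
Qed.

Lemma is_measure_dirac s : is_measure (@Defs.dirac R T s).
Proof.
split => //; exists 1 => f c _ h; rewrite mul1r; exact: h.
Qed.

Lemma is_measure_zero : is_measure (@zerof R T).
Proof.
split => //; rewrite /zerof.
- by move=> *; rewrite addr0.
- by move=> *; rewrite mulr0.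
- by exists 0 => f c _ _; rewrite normr0 mul0r.
Qed.

Lemma is_measure_ext {mu nu} : is_measure mu -> (forall f, mu f = nu f) -> is_measure nu.
Proof. by move=> m e; have -> : nu = mu by apply: funext => f; rewrite e. Qed.

End Basics.
Section Hat.
Context {R : realType} {T : topologicalType}.
Variable P : set (@functional R T * @functional R T).

Lemma aux_lt (a x eps : R) : 0 <= a -> 0 <= x -> x < eps / (a + 1) -> a * x < eps.
Proof.
move=> a0 x0 h; have a1 : 0 < a + 1 by lra.
rewrite ltr_pdivlMr // in h; nra.
Qed.

Lemma hat_of_P : thermo_theory P -> forall q, P q -> hat P q.
Proof.
move=> [th _] q Pq; split; first exact: th.
move=> n fs eps _ e0; exists 1, q; split => // i.
by rewrite !mul1r !subrr normr0.
Qed.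

Lemma in_V_scale (p : @functional R T * @functional R T) a : in_V p ->
  in_V (fun f => a * p.1 f, fun f => a * p.2 f).
Proof.
case=> m1 m2 o; split => /=.
- apply: (is_measure_ext (is_measure_comb a 0 m1 m1)) => f; ring.
- apply: (is_measure_ext (is_measure_comb a 0 m2 m2)) => f; ring.
- by rewrite o mulr0.
Qed.

Lemma hat_scale {p : @functional R T * @functional R T} a : hat P p -> 0 <= a ->
  hat P (fun f => a * p.1 f, fun f => a * p.2 f).
Proof.
case=> Vp Hp a0; split; first exact: in_V_scale.
move=> n fs eps cfs e0.
have e1 : 0 < eps / (a + 1) by apply: divr_gt0 => //; lra.
have [lam [q [Pq l0 Hq]]] := Hp n fs _ cfs e1.
exists (a * lam), q; split => //; first exact: mulr_ge0.
move=> i; have [h1 h2] := Hq i; rewrite /= -!mulrA -!mulrBr !normrM !(ger0_norm a0).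
by split; apply: aux_lt.
Qed.

Lemma hat_add (p q : @functional R T * @functional R T) : thermo_theory P ->
  hat P p -> hat P q -> hat P (fun f => p.1 f + q.1 f, fun f => p.2 f + q.2 f).
Proof.
move=> [_ cv] hp hq.
have h2 : (0:R) <= 1/2 by lra.
have h3 : (1/2:R) <= 1 by lra.
have h4 : (0:R) <= 2 by lra.
have := hat_scale 2 (cv p q _ hp hq h2 h3) h4; rewrite /=.
have -> : (fun f => 2 * (1 / 2 * p.1 f + (1 - 1 / 2) * q.1 f)) = (fun f => p.1 f + q.1 f).
  by apply: funext => f; field.
have -> : (fun f => 2 * (1 / 2 * p.2 f + (1 - 1 / 2) * q.2 f)) = (fun f => p.2 f + q.2 f).
  by apply: funext => f; field.
by apply.
Qed.

Lemma CD_hat eta Temp (p : @functional R T * @functional R T) : CD_pair P eta Temp -> hat P p ->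
  p.2 (fun x => (Temp x)^-1) <= p.1 eta.
Proof.
case=> ceta cT Tpos Hq [Vp Hp].
set g := fun x => (Temp x)^-1.
have cg : continuous g by apply: cV => // x; rewrite gt_eqF.
rewrite leNgt; apply/negP => lt.
set D := p.2 g - p.1 eta.
have D0 : 0 < D / 3 by apply: divr_gt0 => //; rewrite /D subr_gt0.
pose fs : 'I_2 -> T -> R := fun i => if val i == 0%N then eta else g.
have cfs : forall i, continuous (fs i) by move=> i; rewrite /fs; case: ifP.
have [lam [q [Pq l0 Hi]]] := Hp 2%N fs _ cfs D0.
have [h1 _] := Hi ord0.
have [_ h2] := Hi (@Ordinal 2 1 isT).
rewrite /fs /= in h1 h2.
have Hq' := Hq q Pq; rewrite -/g in Hq'.
have : lam * q.2 g <= lam * q.1 eta by apply: ler_wpM2l.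
move: h1 h2; rewrite !ltr_norml => /andP [h1 h1'] /andP [h2 h2'].
rewrite /D in h1 h1' h2 h2'. lra.
Qed.

End Hat.
Arguments hat_of_P {R T P}.
Arguments hat_scale {R T P p}.
Arguments hat_add {R T P p q}.
Arguments CD_hat {R T P eta Temp p}.
Section Bipolar.
Context {R : realType} {T : topologicalType}.
Variable P : set (@functional R T * @functional R T).

Lemma bipolar (p : @functional R T * @functional R T) :
  thermo_theory P -> hat P (zerof, zerof) -> in_V p -> ~ hat P p ->
  exists eta g, [/\ continuous eta, continuous g,
    (forall q, P q -> q.2 g <= q.1 eta) & p.1 eta < p.2 g].
Proof.
move=> th h00 Vp nhp; apply: contrapT => Hno; apply: nhp; split => // n fs eps cfs e0.
apply: contrapT => Happ.
pose X := ('I_n * bool)%type.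
pose Phi (p' : @functional R T * @functional R T) : X -> R :=
  fun x => if x.2 then p'.2 (fs x.1) else p'.1 (fs x.1).
pose nrm (y z : X -> R) := \sum_(x : X) `|y x - z x|.
pose S y := [set nrm y (Phi p') | p' in hat P].
pose d y := inf (S y).
have nrm0 y z : 0 <= nrm y z by apply: sumr_ge0.
have Slb y : has_lbound (S y) by exists 0 => _ [p' _ <-].
have d_le y p' : hat P p' -> d y <= nrm y (Phi p').
  by move=> hp; apply: (ge_inf (Slb y)); exists p'.
have le_d y c : (forall p', hat P p' -> c <= nrm y (Phi p')) -> c <= d y.
  move=> h; apply: lb_le_inf; first by exists (nrm y (Phi (zerof, zerof))), (zerof, zerof).
  by move=> _ [p' hp <-]; exact: h.
have PhiD p1 p2 x : Phi (fun f => p1.1 f + p2.1 f, fun f => p1.2 f + p2.2 f) x = Phi p1 x + Phi p2 x.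
  by rewrite /Phi /=; case: (x.2).
have PhiZ p1 a x : Phi (fun f => a * p1.1 f, fun f => a * p1.2 f) x = a * Phi p1 x.
  by rewrite /Phi /=; case: (x.2).
have dD y1 y2 : d (fun x => y1 x + y2 x) <= d y1 + d y2.
  suff : d (fun x => y1 x + y2 x) - d y2 <= d y1 by lra.
  apply: (le_d) => p1 hp1.
  suff : d (fun x => y1 x + y2 x) - nrm y1 (Phi p1) <= d y2 by lra.
  apply: (le_d) => p2 hp2.
  have := d_le (fun x => y1 x + y2 x) _ (hat_add th hp1 hp2).
  have : nrm (fun x => y1 x + y2 x) (Phi (fun f => p1.1 f + p2.1 f, fun f => p1.2 f + p2.2 f))
      <= nrm y1 (Phi p1) + nrm y2 (Phi p2).
    rewrite /nrm -big_split /=; apply: ler_sum => x _; rewrite PhiD.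
    have -> : y1 x + y2 x - (Phi p1 x + Phi p2 x) = (y1 x - Phi p1 x) + (y2 x - Phi p2 x) by ring.
    exact: ler_normD.
  lra.
have dZ t y : 0 < t -> t * d y <= d (fun x => t * y x).
  move=> t0; apply: (le_d) => p' hp'.
  have ti : 0 <= t^-1 by rewrite invr_ge0 ltW.
  have hs := hat_scale t^-1 hp' ti.
  have := d_le y _ hs.
  have -> : nrm (fun x => t * y x) (Phi p') =
      t * nrm y (Phi (fun f => t^-1 * p'.1 f, fun f => t^-1 * p'.2 f)).
    rewrite /nrm mulr_sumr; apply: eq_bigr => x _; rewrite PhiZ.
    have -> : t * y x - Phi p' x = t * (y x - t^-1 * Phi p' x).
      by rewrite mulrBr mulrA mulfV ?gt_eqF // mul1r.
    by rewrite normrM gtr0_norm.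
  by move=> h; rewrite ler_pM2l.
have [nu [nuD nuZ nule nux]] := @HahnBanach R X setT (fun _ _ _ _ => I) (fun _ _ _ => I)
   d (fun f g _ _ => dD f g) (fun t f _ t0 => dZ t f t0) (Phi p) I.
have e2 : 0 < eps / 2 by apply: divr_gt0.
have dpos : 0 < d (Phi p).
  apply: (lt_le_trans e2); apply: (le_d) => p' hp'.
  rewrite leNgt; apply/negP => small.
  apply: Happ.
  have [lam [q [Pq l0 Hq]]] := hp'.2 n fs (eps/2) cfs e2.
  exists lam, q; split => // i.
  have le_term x : `|Phi p x - Phi p' x| <= nrm (Phi p) (Phi p').
    by rewrite /nrm (bigD1 x) //= ler_wpDr // sumr_ge0.
  have t1 := le_term (i, false); have t2 := le_term (i, true).
  rewrite /Phi /= in t1 t2.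
  have [h1 h2] := Hq i.
  split.
  + have -> : p.1 (fs i) - lam * q.1 (fs i) =
       (p.1 (fs i) - p'.1 (fs i)) + (p'.1 (fs i) - lam * q.1 (fs i)) by ring.
    apply: (le_lt_trans (ler_normD _ _)); lra.
  + have -> : p.2 (fs i) - lam * q.2 (fs i) =
       (p.2 (fs i) - p'.2 (fs i)) + (p'.2 (fs i) - lam * q.2 (fs i)) by ring.
    apply: (le_lt_trans (ler_normD _ _)); lra.
have dq q : P q -> d (Phi q) <= 0.
  move=> Pq; apply: (le_trans (d_le _ _ (hat_of_P th _ Pq))).
  by rewrite /nrm big1 // => x _; rewrite subrr normr0.
have nu_lin y : nu y = \sum_(x : X) y x * nu (fun z => (z == x)%:R).
  have ey : y = (fun z => \sum_(x : X) y x * (z == x)%:R).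
    apply: funext => z; rewrite (bigD1 z) //= eqxx mulr1 big1 ?addr0 // => x nx.
    by rewrite eq_sym (negbTE nx) mulr0.
  have gen (s : seq X) : nu (fun z => \sum_(x <- s) y x * (z == x)%:R) =
      \sum_(x <- s) y x * nu (fun z => (z == x)%:R).
    elim: s => [|x s IH].
      rewrite big_nil.
      have -> : (fun z : X => \sum_(x <- [::]) y x * (z == x)%:R) = (fun z => 0 * y z).
        by apply: funext => z; rewrite big_nil mul0r.
      by rewrite nuZ // mul0r.
    rewrite big_cons -IH -nuZ // -nuD //.
    by apply: f_equal; apply: funext => z; rewrite big_cons.
  by rewrite {1}ey gen.
pose w x := nu (fun z : X => (z == x)%:R).
pose g := fun t => \sum_(x : X) (if x.2 then w x else 0) * fs x.1 t.
pose eta := fun t => \sum_(x : X) (if x.2 then 0 else - w x) * fs x.1 t.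
have cg : continuous g by apply: csum => x; apply: cZ.
have ceta : continuous eta by apply: csum => x; apply: cZ.
have key q : in_V q -> nu (Phi q) = q.2 g - q.1 eta.
  case=> m1 m2 _; rewrite nu_lin /g /eta !meas_sum //; try by move=> x; apply: cZ.
  rewrite -sumrB; apply: eq_bigr => x _; rewrite !measZ // /Phi /w.
  by case: (x.2) => /=; ring.
apply: Hno; exists eta, g; split => //.
- move=> q Pq; have := key q (th.1 q Pq); have := nule (Phi q) I; have := dq q Pq; lra.
- have := key p Vp; lra.
Qed.

End Bipolar.
Lemma ratio_aux (R : realType) (a b c' c : R) : 0 < a -> 0 < b ->
  c' * a^-1 = c * b^-1 -> c' * b = c * a.
Proof.
move=> a0 b0 e.
have -> : c' * b = (c' * a^-1) * (a * b) by field; rewrite gt_eqF.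
have -> : c * a = (c * b^-1) * (a * b) by field; rewrite gt_eqF.
by rewrite e.
Qed.

Lemma fin_aux (R : realType) (a b a0 b0 c' c : R) : 0 < a0 -> 0 < c ->
  c' * a0 = c * a -> c' * b0 = c * b -> b = b0 / a0 * a.
Proof.
move=> h0 c0 e1 e2.
have cn : c != 0 by rewrite gt_eqF.
apply: (mulfI cn).
by rewrite -e2 mulrCA -e1; field; rewrite gt_eqF.
Qed.

Section Main.
Context {R : realType} {T : topologicalType}.
Variable P : set (@functional R T * @functional R T).

Lemma exists_CD : compact [set: T] -> Kelvin_Planck P ->
  exists eta T0, CD_pair P eta T0.
Proof.
move=> cT [th h00 KPc].
pose G g := continuous g /\ exists eta, continuous eta /\ forall q, P q -> q.2 g <= q.1 eta.
have [[g [[cg [eta [ceta Hq]]] gpos]] | nog] :=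
  pselect (exists g, G g /\ forall x, 0 < g x).
  exists eta, (fun x => (g x)^-1); split => //.
  - by apply: cV => // x; rewrite gt_eqF.
  - by move=> x; rewrite invr_gt0.
  - move=> q Pq; have -> : (fun x => ((g x)^-1)^-1) = g by apply: funext => x; rewrite invrK.
    exact: Hq.
exfalso.
have mP q : P q -> is_measure q.1 /\ is_measure q.2 by move=> /(th.1) [].
have G0 : G (fun _ => 0).
  split; first exact: cC.
  exists (fun _ => 0); split; first exact: cC.
  by move=> q /mP [m1 m2]; rewrite !meas0.
have GD g1 g2 : G g1 -> G g2 -> G (fun x => g1 x + g2 x).
  move=> [c1 [e1 [ce1 H1]]] [c2 [e2 [ce2 H2]]]; split; first exact: cD.
  exists (fun x => e1 x + e2 x); split; first exact: cD.
  move=> q Pq; have [m1 m2] := mP q Pq; rewrite !measD //.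
  have := H1 q Pq; have := H2 q Pq; lra.
have GZ a g : 0 <= a -> G g -> G (fun x => a * g x).
  move=> a0 [c1 [e1 [ce1 H1]]]; split; first exact: cZ.
  exists (fun x => a * e1 x); split; first exact: cZ.
  move=> q Pq; have [m1 m2] := mP q Pq; rewrite !measZ //.
  exact: ler_wpM2l (H1 q Pq).
have noG g c : G g -> (forall x, c <= g x) -> c <= 0.
  move=> Gg h; rewrite leNgt; apply/negP => c0; apply: nog; exists g; split => // x.
  exact: lt_le_trans c0 (h x).
pose Sf f := [set r | exists g, G g /\ forall x, f x <= g x + r].
pose phi f := inf (Sf f).
have Sne f : continuous f -> Sf f !=set0.
  move=> cf; have [M HM] := cbounded _ cT cf; exists M, (fun _ => 0); split => // x.
  rewrite add0r; exact: le_trans (ler_norm _) (HM x).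
have Slb f : continuous f -> has_lbound (Sf f).
  move=> cf; have [M HM] := cbounded _ cT cf; exists (- M) => r [g [Gg Hg]].
  have : - M - r <= 0.
    apply: (noG g) => // x; have := Hg x; have := HM x.
    rewrite ler_norml => /andP [h1 _]; lra.
  lra.
have phi_le f g r : continuous f -> G g -> (forall x, f x <= g x + r) -> phi f <= r.
  by move=> cf Gg h; apply: (ge_inf (Slb f cf)); exists g.
have le_phi f c : continuous f ->
    (forall g r, G g -> (forall x, f x <= g x + r) -> c <= r) -> c <= phi f.
  move=> cf h; apply: lb_le_inf; first exact: Sne.
  by move=> r [g [Gg Hg]]; exact: h Gg Hg.
have phiD f1 f2 : continuous f1 -> continuous f2 ->
    phi (fun x => f1 x + f2 x) <= phi f1 + phi f2.
  move=> c1 c2; have c12 := cD c1 c2.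
  suff : phi (fun x => f1 x + f2 x) - phi f2 <= phi f1 by lra.
  apply: (le_phi) => // g1 r1 G1 H1.
  suff : phi (fun x => f1 x + f2 x) - r1 <= phi f2 by lra.
  apply: (le_phi) => // g2 r2 G2 H2.
  suff : phi (fun x => f1 x + f2 x) <= r1 + r2 by lra.
  apply: (phi_le _ _ _ c12 (GD _ _ G1 G2)) => x; have := H1 x; have := H2 x; lra.
have phiZ t f : continuous f -> 0 < t -> t * phi f <= phi (fun x => t * f x).
  move=> cf t0; apply: (le_phi) => [|g r Gg Hg]; first exact: cZ.
  have ti : 0 <= t^-1 by rewrite invr_ge0 ltW.
  have : phi f <= t^-1 * r.
    apply: (phi_le _ _ _ cf (GZ _ _ ti Gg)) => x.
    have := ler_wpM2l ti (Hg x).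
    by rewrite mulrA mulVf ?gt_eqF // mul1r mulrDr.
  move=> h; have := ler_wpM2l (ltW t0) h.
  by rewrite mulrA mulfV ?gt_eqF // mul1r.
have cone : continuous (@Defs.one R T) := cC 1.
have [nu [nuD nuZ nule nux]] := @HahnBanach R T (fun f : T -> R => continuous f)
  (fun f g => @cD R T f g) (fun a f => @cZ R T a f) phi phiD phiZ Defs.one cone.
have phi1 : 1 <= phi Defs.one.
  apply: (le_phi) => // g r Gg Hg.
  have : 1 - r <= 0 by apply: (noG g) => // x; have := Hg x; rewrite /Defs.one; lra.
  lra.
have numeas : is_measure nu.
  split.
  - by move=> f g cf cg; exact: nuD.
  - by move=> a f cf; exact: nuZ.
  - exists 1 => f c cf hb; rewrite mul1r ler_norml; apply/andP; split.
    + have h := nule _ (cZ (-1) cf); rewrite nuZ // in h.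
      have : phi (fun x => -1 * f x) <= c.
        apply: (phi_le _ _ _ (cZ (-1) cf) G0) => x; have := hb x.
        rewrite ler_norml => /andP [h1 h2]; lra.
      lra.
    + apply: (le_trans (nule _ cf)); apply: (phi_le _ _ _ cf G0) => x; have := hb x.
      rewrite ler_norml => /andP [h1 h2]; lra.
have nupos : is_pos_measure nu.
  split => // f cf fpos.
  have h := nule _ (cZ (-1) cf); rewrite nuZ // in h.
  have : phi (fun x => -1 * f x) <= 0.
    by apply: (phi_le _ _ _ (cZ (-1) cf) G0) => x; have := fpos x; lra.
  lra.
have hatnu : hat P (zerof, nu).
  apply: contrapT => nh.
  have Vn : in_V (zerof, nu) by split => //; exact: is_measure_zero.
  have [eta [g [ceta cg Hq lt]]] := bipolar _ _ th h00 Vn nh.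
  have Gg : G g by split => //; exists eta.
  have : nu g <= 0.
    by apply: (le_trans (nule _ cg)); apply: (phi_le _ _ _ cg Gg) => x; lra.
  rewrite /= /zerof in lt; lra.
have := KPc (zerof, nu) hatnu (fun f _ => erefl) nupos Defs.one cone.
rewrite /= /zerof => e; move: phi1; rewrite -nux e; lra.
Qed.

End Main.
Theorem proposition4p1 (R : realType) (T : topologicalType)
  (P : set (@functional R T * @functional R T)) (S0 : set T) :
  compact [set: T] -> hausdorff_space T -> Kelvin_Planck P ->
  ((exists T0 : T -> R, CD_scale P T0 /\
      forall T1 : T -> R, CD_scale P T1 ->
        exists c : R, 0 < c /\ forall x, S0 x -> T1 x = c * T0 x)
   <->
   (forall s s' : T, S0 s -> S0 s' -> s <> s' -> has_Carnot P s' s)).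
Proof.
move=> cT _ KP; have [th h00 KPc] := KP.
have mP q : P q -> is_measure q.1 /\ is_measure q.2 by move=> /(th.1) [].
split.
- move=> [T0 [[eta0 cd0] prop]] s s' S0s S0s' ss'.
  have [ceta0 cT0 T0pos Hq0] := cd0.
  have key (p : @functional R T * @functional R T) (sg : R) : in_V p ->
      (forall f, p.1 f = 0) ->
      (forall f, p.2 f = sg * (T0 s' * f s' - T0 s * f s)) -> hat P p.
    move=> Vp h1 h2; apply: contrapT => nh.
    have [eta [g [ceta cg Hq lt]]] := bipolar _ _ th h00 Vp nh.
    rewrite h1 h2 in lt.
    pose g0 := fun x => (T0 x)^-1.
    have cg0 : continuous g0 by apply: cV => // x; rewrite gt_eqF.
    have [M HM] := cbounded _ cT cT0.
    have [Mg HMg] := cbounded _ cT cg.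
    have M0 : 0 < M.
      have h := HM s; rewrite gtr0_norm ?T0pos // in h; have := T0pos s; lra.
    have Mg0 : 0 <= Mg by have := HMg s; have := normr_ge0 (g s); lra.
    pose lam := M^-1 * (Mg + 1)^-1.
    have a0 : 0 < M^-1 by rewrite invr_gt0.
    have b0 : 0 < (Mg + 1)^-1 by rewrite invr_gt0; lra.
    have b1 : (Mg + 1)^-1 * (Mg + 1) = 1 by rewrite mulVf // gt_eqF //; lra.
    have lam0 : 0 < lam by apply: mulr_gt0.
    have lamM : lam * Mg < M^-1 by rewrite /lam; nra.
    have g0lb x : M^-1 <= g0 x.
      rewrite /g0 lef_pV2 ?posrE //; have := HM x; rewrite gtr0_norm //.
    have pos x : 0 < g0 x + lam * g x.
      have k1 : lam * `|g x| <= lam * Mg by apply: ler_wpM2l => //; exact: ltW.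
      have k2 : lam * (- g x) <= lam * `|g x|.
        by apply: ler_wpM2l; [exact: ltW | rewrite -normrN ler_norm].
      rewrite mulrN in k2; have := g0lb x; lra.
    pose T1 := fun x => (g0 x + lam * g x)^-1.
    have cd1 : CD_pair P (fun x => eta0 x + lam * eta x) T1.
      split.
      - exact: cD ceta0 (cZ lam ceta).
      - apply: cV; first exact: cD cg0 (cZ lam cg).
        by move=> x; rewrite gt_eqF // pos.
      - by move=> x; rewrite invr_gt0.
      - move=> q Pq; have [m1 m2] := mP q Pq.
        have -> : (fun x => (T1 x)^-1) = (fun x => g0 x + lam * g x).
          by apply: funext => x; rewrite invrK.
        rewrite (measD m2 cg0 (cZ lam cg)) (measD m1 ceta0 (cZ lam ceta)).
        rewrite (measZ lam m2 cg) (measZ lam m1 ceta).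
        have := Hq0 q Pq; have := ler_wpM2l (ltW lam0) (Hq q Pq).
        rewrite /g0; lra.
    have [k [k0 Hk]] := prop T1 (ex_intro (fun e => CD_pair P e T1) _ cd1).
    have E s0 : S0 s0 -> T0 s0 * (g0 s0 + lam * g s0) = k^-1.
      move=> Ss; have e := Hk s0 Ss; rewrite /T1 in e.
      rewrite -[g0 s0 + _]invrK e invfM mulrCA mulfV ?gt_eqF ?T0pos // mulr1 //.
    have g0T x : T0 x * g0 x = 1 by rewrite /g0 mulfV // gt_eqF.
    have X0 : lam * (T0 s' * g s' - T0 s * g s) = 0.
      have -> : lam * (T0 s' * g s' - T0 s * g s) =
         (T0 s' * (g0 s' + lam * g s') - T0 s' * g0 s') -
         (T0 s * (g0 s + lam * g s) - T0 s * g0 s) by ring.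
      by rewrite E // E // !g0T subrr.
    move/eqP: X0; rewrite mulf_eq0 gt_eqF //= => /eqP X0.
    by rewrite X0 mulr0 ltxx in lt.
  exists (T0 s'), (T0 s); split; [exact: T0pos | exact: T0pos |].
  split.
  + apply: (key _ 1) => //=.
    split => //=; first exact: is_measure_zero.
    apply: (is_measure_ext (is_measure_comb (T0 s') (- T0 s)
              (is_measure_dirac s') (is_measure_dirac s))) => f.
    by rewrite /Defs.dirac; ring.
    by move=> f; rewrite /Defs.dirac mul1r.
  + apply: (key _ (-1)) => //=.
    split => //=.
    * apply: (is_measure_ext is_measure_zero) => f; by rewrite /zerof oppr0.
    * apply: (is_measure_ext (is_measure_comb (- T0 s') (T0 s)
              (is_measure_dirac s') (is_measure_dirac s))) => f.
      by rewrite /Defs.dirac; ring.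
    * by rewrite /zerof oppr0.
    * by move=> f; rewrite /zerof oppr0.
    * by move=> f; rewrite /Defs.dirac; ring.
- move=> Hc.
  have [eta0 [T0 cd0]] := exists_CD P cT KP.
  exists T0; split; first by exists eta0.
  move=> T1 [eta1 cd1].
  have rat eta Temp s s' c' c : CD_pair P eta Temp ->
      reversible P (zerof, fun f => c' * Defs.dirac s' f - c * Defs.dirac s f) ->
      c' * (Temp s')^-1 = c * (Temp s)^-1.
    move=> cd [h1 h2]; have := CD_hat cd h1; have := CD_hat cd h2.
    rewrite /= /zerof /Defs.dirac; lra.
  have [ceta0 cT0 T0pos Hq0] := cd0.
  have [ceta1 cT1 T1pos Hq1] := cd1.
  have [[s0 Ss0]|nS] := pselect (exists s0, S0 s0); last first.
    by exists 1; split => // x Sx; exfalso; apply: nS; exists x.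
  exists (T1 s0 / T0 s0); split; first by apply: divr_gt0.
  move=> x Sx; have [->|nx] := pselect (x = s0).
    by rewrite divfK // gt_eqF.
  have [c' [c [c'0 c0 rev]]] := Hc s0 x Ss0 Sx (fun e => nx (esym e)).
  have r0 := ratio_aux R _ _ _ _ (T0pos x) (T0pos s0) (rat _ _ _ _ _ _ cd0 rev).
  have r1 := ratio_aux R _ _ _ _ (T1pos x) (T1pos s0) (rat _ _ _ _ _ _ cd1 rev).
  exact: fin_aux R _ _ _ _ _ _ (T0pos s0) c0 r0 r1.
Qed.
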